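(* For every unweighted congestion game $\mathcal{G}$ with cubic latency functions, $\mathrm{PoS}(\mathcal{G})\le 3.322$.
   Context: A weighted congestion game consists of a finite set $[n]=\{1,\dots,n\}$ of players, a finite set $E$ of resources, for each player $i$ a weight $w_i>0$ and a nonempty finite strategy set $\Sigma_i\subseteq 2^E$, and for each resource $e$ a latency function $\ell_e:\mathbb{R}_{\ge 0}\to\mathbb{R}_{\ge 0}$. It is unweighted if $w_i=1$ for all $i$. Cubic latency functions means $\ell_e(x)=\sum_{j=0}^{3}\alpha_{e,j}x^j$ with all $\alpha_{e,j}\ge 0$. For a strategy profile $S=(s_1,\dots,s_n)$, the congestion of $e$ is $L_e(S)=\sum_{i:\,e\in s_i}w_i$, the cost of player $i$ is $c_i(S)=\sum_{e\in s_i}\ell_e(L_e(S))$, and $\mathrm{SUM}(S)=\sum_i c_i(S)$; $S^*$ minimizes $\mathrm{SUM}$. A pure Nash equilibrium (PNE) is a profile $S$ with $c_i(S)\le c_i(S_{-i}\diamond t)$ for all $i$ and $t\in\Sigma_i$, where $(S_{-i}\diamond t)$ replaces $s_i$ by $t$. $\mathrm{PoS}(\mathcal{G})=\min_{S\ \mathrm{PNE}}\mathrm{SUM}(S)/\mathrm{SUM}(S^* )$. *)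

(* Defs.v *)
From HB Require Import structures.
From mathcomp Require Import all_boot all_order all_algebra.
Set Implicit Arguments. Unset Strict Implicit. Unset Printing Implicit Defensive.
Import Order.TTheory GRing.Theory Num.Theory.
Local Open Scope ring_scope.

Definition cubic_latency (R : realFieldType) (E : finType)
  (alpha : E -> 'I_4 -> R) (e : E) (x : R) : R :=
  \sum_(j < 4) alpha e j * x ^+ (nat_of_ord j).

Definition load (R : realFieldType) (n : nat) (E : finType)
  (S : 'I_n -> {set E}) (e : E) : R :=
  \sum_(i < n | e \in S i) 1.

Definition cost (R : realFieldType) (n : nat) (E : finType)
  (alpha : E -> 'I_4 -> R) (S : 'I_n -> {set E}) (i : 'I_n) : R :=
  \sum_(e in S i) cubic_latency alpha e (load R S e).

Definition SUM (R : realFieldType) (n : nat) (E : finType)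
  (alpha : E -> 'I_4 -> R) (S : 'I_n -> {set E}) : R :=
  \sum_(i < n) cost alpha S i.

Definition feasible (n : nat) (E : finType) (Sigma : 'I_n -> {set {set E}})
  (S : 'I_n -> {set E}) : Prop :=
  forall i, S i \in Sigma i.

Definition update (n : nat) (E : finType) (S : 'I_n -> {set E}) (i : 'I_n)
  (t : {set E}) : 'I_n -> {set E} :=
  fun j => if j == i then t else S j.

Definition isPNE (R : realFieldType) (n : nat) (E : finType)
  (Sigma : 'I_n -> {set {set E}}) (alpha : E -> 'I_4 -> R)
  (S : 'I_n -> {set E}) : Prop :=
  feasible Sigma S /\
  forall i t, t \in Sigma i -> cost alpha S i <= cost alpha (update S i t) i.

(* Main.v *)
Require Import Defs.
From HB Require Import structures.
From mathcomp Require Import all_boot all_order all_algebra.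
From mathcomp Require Import ring lra.
Import Order.TTheory GRing.Theory Num.Theory.
Local Open Scope ring_scope.

Section F.
Variable R : realFieldType.
Local Notation ca := (3317/10000 : R).
Local Notation cb := (299/100 : R).
Local Notation rho := (3322%:R / 1000%:R : R).

Lemma q4 (u v : R) : 0 <= u -> 0 <= v ->
  0 <= 99/1250 * u^+4 - 3317/10000 * u^+3 * v + 5149/2000 * v^+4.
Proof.
move=> hu hv.
have h1 : 0 <= (u^+2 - 20941/10000 * u * v - 329/100 * v^+2)^+2 by apply: sqr_ge0.
have h2 : 0 <= ((u - 314/100 * v) * v)^+2 by apply: sqr_ge0.
have h3 : 0 <= (v^+2)^+2 by apply: sqr_ge0.
have h4 : 0 <= u^+3 * v by apply: mulr_ge0 => //; apply: exprn_ge0.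
have h5 : 0 <= u * v^+3 by apply: mulr_ge0 => //; apply: exprn_ge0.
lra.
Qed.

Lemma hints {u v : R} : 0 <= u -> 0 <= v ->
  0 <= u * v /\ 0 <= u^+2 * v /\ 0 <= u * v^+2 /\ 0 <= (u - v)^+2 /\ 0 <= (u-v)^+2 * (2*u+v) /\
  0 <= u^+2 /\ 0 <= u^+3 /\ 0 <= u^+4 /\ 0 <= v^+2 /\ 0 <= v^+3 /\ 0 <= v^+4.
Proof.
move=> hu hv.
have ? := exprn_ge0 2 hu; have ? := exprn_ge0 2 hv.
split; first exact: mulr_ge0.
split; first exact: mulr_ge0.
split; first exact: mulr_ge0.
split; first exact: sqr_ge0.
split; first by apply: mulr_ge0; [apply: sqr_ge0|lra].
by rewrite !exprn_ge0.
Qed.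

Definition P1 (m : R) := m * (m + 1) / 2.
Definition P2 (m : R) := m * (m + 1) * (2 * m + 1) / 6.
Definition P3 (m : R) := (m * (m + 1))^+2 / 4.

Lemma F0 (X Y : R) : 0 <= X -> 0 <= Y ->
  X + ca * (Y - X) + cb * (Y - X) <= rho * Y.
Proof. move=> hX hY. lra. Qed.

Lemma F1 (X Y : R) : 0 <= X -> 0 <= Y -> (X = 0 \/ 1 <= X) -> (Y = 0 \/ 1 <= Y) ->
  X ^+ 2 + ca * (Y * (X + 1) - X^+2) + cb * (P1 Y - P1 X) <= rho * Y^+2.
Proof.
rewrite /P1 => hX hY [->|hX1] [->|hY1].
- lra.
- have [v [hv ->]] : exists v, 0 <= v /\ Y = v + 1 by exists (Y - 1); split; [lra|ring].
  have [? [? [? [? [? [? [? [? [? [? ?]]]]]]]]]] := hints (le_refl 0) hv. lra.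
- have [? [? [? [? [? [? [? [? [? [? ?]]]]]]]]]] := hints hX (le_refl 0). lra.
have [u [hu ->]] : exists u, 0 <= u /\ X = u + 1 by exists (X - 1); split; [lra|ring].
have [v [hv ->]] : exists v, 0 <= v /\ Y = v + 1 by exists (Y - 1); split; [lra|ring].
have [? [? [? [? [? [? [? [? [? [? ?]]]]]]]]]] := hints hu hv.
lra.
Qed.

Lemma F2 (X Y : R) : 0 <= X -> 0 <= Y -> (X = 0 \/ 1 <= X) -> (Y = 0 \/ 1 <= Y) ->
  X ^+ 3 + ca * (Y * (X + 1)^+2 - X^+3) + cb * (P2 Y - P2 X) <= rho * Y^+3.
Proof.
rewrite /P2 => hX hY [->|hX1] [->|hY1].
- lra.
- have [v [hv ->]] : exists v, 0 <= v /\ Y = v + 1 by exists (Y - 1); split; [lra|ring].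
  have [? [? [? [? [? [? [? [? [? [? ?]]]]]]]]]] := hints (le_refl 0) hv. lra.
- have [? [? [? [? [? [? [? [? [? [? ?]]]]]]]]]] := hints hX (le_refl 0). lra.
have [u [hu ->]] : exists u, 0 <= u /\ X = u + 1 by exists (X - 1); split; [lra|ring].
have [v [hv ->]] : exists v, 0 <= v /\ Y = v + 1 by exists (Y - 1); split; [lra|ring].
have [? [? [? [? [? [? [? [? [? [? ?]]]]]]]]]] := hints hu hv.
lra.
Qed.

Lemma F3 (X Y : R) : 0 <= X -> 0 <= Y -> (X = 0 \/ 1 <= X) -> (Y = 0 \/ 1 <= Y) ->
  X ^+ 4 + ca * (Y * (X + 1)^+3 - X^+4) + cb * (P3 Y - P3 X) <= rho * Y^+4.
Proof.
rewrite /P3 => hX hY [->|hX1] [->|hY1].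
- lra.
- have [v [hv ->]] : exists v, 0 <= v /\ Y = v + 1 by exists (Y - 1); split; [lra|ring].
  have [? [? [? [? [? [? [? [? [? [? ?]]]]]]]]]] := hints (le_refl 0) hv. lra.
- have [? [? [? [? [? [? [? [? [? [? ?]]]]]]]]]] := hints hX (le_refl 0). lra.
have [u [hu ->]] : exists u, 0 <= u /\ X = u + 1 by exists (X - 1); split; [lra|ring].
have [v [hv ->]] : exists v, 0 <= v /\ Y = v + 1 by exists (Y - 1); split; [lra|ring].
have [? [? [? [? [? [? [? [? [? [? ?]]]]]]]]]] := hints hu hv.
have := q4 u v hu hv. lra.
Qed.

Lemma ell_expand4 (z : R) (alpha : 'I_4 -> R) : \sum_(j < 4) alpha j * z ^+ j =
  alpha ord0 + alpha (inord 1) * z + alpha (inord 2) * z^+2 + alpha (inord 3) * z^+3.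
Proof. rewrite !big_ord_recl big_ord0 addr0 /= expr0 mulr1 expr1 !addrA.
have -> : lift ord0 (lift ord0 (lift ord0 ord0)) = inord 3 :> 'I_4 by apply/val_inj; rewrite /= inordK.
have -> : lift ord0 (lift ord0 ord0) = inord 2 :> 'I_4 by apply/val_inj; rewrite /= inordK.
have -> : lift ord0 ord0 = inord 1 :> 'I_4 by apply/val_inj; rewrite /= inordK.
by [].
Qed.

Lemma P1S (m : R) : P1 (1 + m) = P1 m + (1 + m). Proof. rewrite /P1; lra. Qed.
Lemma P2S (m : R) : P2 (1 + m) = P2 m + (1 + m)^+2. Proof. rewrite /P2; lra. Qed.
Lemma P3S (m : R) : P3 (1 + m) = P3 m + (1 + m)^+3. Proof. rewrite /P3; lra. Qed.
Lemma P0 : P1 0 = 0 /\ P2 0 = 0 /\ P3 0 = 0.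
Proof. rewrite /P1 /P2 /P3; split; [|split]; lra. Qed.
End F.
Arguments F0 {R X Y}. Arguments F1 {R X Y}. Arguments F2 {R X Y}. Arguments F3 {R X Y}.
Arguments P1 {R}. Arguments P2 {R}. Arguments P3 {R}.

Section Game.
Variables (R : realFieldType) (n : nat) (E : finType) (alpha : E -> 'I_4 -> R).
Hypothesis halpha : forall e j, 0 <= alpha e j.
Local Notation ca := (3317/10000 : R).
Local Notation cb := (299/100 : R).
Local Notation rho := (3322%:R / 1000%:R : R).
Local Notation ell e z := (cubic_latency alpha e z).

Definition ld (S : 'I_n -> {set E}) (e : E) : nat := \sum_(i < n) (e \in S i).
Definition lo (S : 'I_n -> {set E}) (i : 'I_n) (e : E) : nat :=
  \sum_(j < n | j != i) (e \in S j).
Definition pot e (m : nat) : R := \sum_(k < m) ell e (k.+1)%:R.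
Definition Phi (S : 'I_n -> {set E}) : R := \sum_e pot e (ld S e).

Lemma loadE S e : load R S e = (ld S e)%:R.
Proof.
rewrite /load /ld natr_sum big_mkcond /=.
by apply: eq_bigr => i _; case: (e \in S i).
Qed.

Lemma sum_in (A : {set E}) (f : E -> R) :
  \sum_(e in A) f e = \sum_e (e \in A)%:R * f e.
Proof.
rewrite big_mkcond /=; apply: eq_bigr => e _.
by case: (e \in A); rewrite /= ?mul1r ?mul0r.
Qed.

Lemma exch (T : 'I_n -> {set E}) (g : E -> R) :
  \sum_(i < n) \sum_e (e \in T i)%:R * g e = \sum_e (ld T e)%:R * g e.
Proof.
rewrite exchange_big; apply: eq_bigr => e _.
by rewrite -mulr_suml /ld natr_sum.
Qed.

Lemma SUM_res S : SUM alpha S = \sum_e (ld S e)%:R * ell e (ld S e)%:R.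
Proof.
rewrite /SUM /cost.
under eq_bigr do rewrite sum_in.
rewrite exch; apply: eq_bigr => e _; by rewrite loadE.
Qed.

Lemma ld_split S i e : ld S e = ((e \in S i) + lo S i e)%N.
Proof. by rewrite /ld (bigD1 i). Qed.

Lemma ld_upd S i t e : ld (update S i t) e = ((e \in t) + lo S i e)%N.
Proof.
rewrite (ld_split _ i) /update eqxx; congr (_ + _).
by apply: eq_bigr => j /negbTE ->.
Qed.

Lemma potS e m : pot e m.+1 = pot e m + ell e (m.+1)%:R.
Proof. by rewrite /pot big_ord_recr. Qed.

Lemma pot_add e m (b : bool) : pot e (b + m)%N = pot e m + b%:R * ell e (m.+1)%:R.
Proof. by case: b; rewrite /= ?add1n ?add0n ?potS ?mul1r ?mul0r ?addr0. Qed.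

Lemma cost_upd S i t :
  cost alpha (update S i t) i = \sum_e (e \in t)%:R * ell e (lo S i e).+1%:R.
Proof.
rewrite /cost.
have -> : update S i t i = t by rewrite /update eqxx.
rewrite sum_in; apply: eq_bigr => e _.
rewrite loadE ld_upd; by case: (e \in t); rewrite /= ?add1n ?mul0r.
Qed.

Lemma cost_S S i :
  cost alpha S i = \sum_e (e \in S i)%:R * ell e (lo S i e).+1%:R.
Proof.
rewrite /cost sum_in; apply: eq_bigr => e _.
rewrite loadE (ld_split S i); by case: (e \in S i); rewrite /= ?add1n ?mul0r.
Qed.

Lemma Phi_upd S i t :
  Phi (update S i t) - Phi S = cost alpha (update S i t) i - cost alpha S i.
Proof.
rewrite cost_upd cost_S /Phi.
rewrite (eq_bigr (fun e => pot e (lo S i e) + (e \in t)%:R * ell e (lo S i e).+1%:R));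
  last by move=> e _; rewrite ld_upd pot_add.
rewrite [X in _ - X](eq_bigr (fun e => pot e (lo S i e) + (e \in S i)%:R * ell e (lo S i e).+1%:R));
  last by move=> e _; rewrite (ld_split S i) pot_add.
rewrite !big_split /=. lra.
Qed.


Lemma ell_mono e (x y : R) : 0 <= x -> x <= y -> ell e x <= ell e y.
Proof.
move=> hx hxy; rewrite /cubic_latency; apply: ler_sum => j _.
apply: ler_wpM2l; first exact: halpha.
by apply: lerXn2r; rewrite ?nnegrE //; apply: le_trans hxy.
Qed.

Lemma cost_upd_le S i t :
  cost alpha (update S i t) i <= \sum_e (e \in t)%:R * ell e (ld S e).+1%:R.
Proof.
rewrite cost_upd; apply: ler_sum => e _.
apply: ler_wpM2l; first exact: ler0n.
apply: ell_mono; first exact: ler0n.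
by rewrite ler_nat (ld_split S i) ltnS leq_addl.
Qed.

Lemma ellE e z : ell e z = alpha e ord0 + alpha e (inord 1) * z
   + alpha e (inord 2) * z^+2 + alpha e (inord 3) * z^+3.
Proof. exact: ell_expand4. Qed.

Lemma pot_closed e m : pot e m = alpha e ord0 * m%:R + alpha e (inord 1) * P1 m%:R
   + alpha e (inord 2) * P2 m%:R + alpha e (inord 3) * P3 m%:R.
Proof.
elim: m => [|m IH].
  have [h1 [h2 h3]] := @P0 R.
  by rewrite /pot big_ord0 h1 h2 h3 !mulr0 !addr0.
rewrite potS IH ellE -nat1r P1S P2S P3S; lra.
Qed.

Lemma per_res e (x y : nat) :
  x%:R * ell e x%:R + ca * (y%:R * ell e x.+1%:R - x%:R * ell e x%:R)
  + cb * (pot e y - pot e x) <= rho * (y%:R * ell e y%:R).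
Proof.
have hX : 0 <= x%:R :> R by exact: ler0n.
have hY : 0 <= y%:R :> R by exact: ler0n.
have hX1 : x%:R = 0 :> R \/ 1 <= x%:R :> R by case: x {hX} => [|k]; [left|right; rewrite ler1n].
have hY1 : y%:R = 0 :> R \/ 1 <= y%:R :> R by case: y {hY} => [|k]; [left|right; rewrite ler1n].
have := F0 hX hY; rewrite -subr_ge0 => /(mulr_ge0 (halpha e ord0)) g0.
have := F1 hX hY hX1 hY1; rewrite -subr_ge0 => /(mulr_ge0 (halpha e (inord 1))) g1.
have := F2 hX hY hX1 hY1; rewrite -subr_ge0 => /(mulr_ge0 (halpha e (inord 2))) g2.
have := F3 hX hY hX1 hY1; rewrite -subr_ge0 => /(mulr_ge0 (halpha e (inord 3))) g3.
rewrite !ellE !pot_closed -natr1.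
move: g0 g1 g2 g3; set X := x%:R; set Y := y%:R.
lra.
Qed.

Lemma Phi_ffun (S : 'I_n -> {set E}) : Phi [ffun j => S j] = Phi S.
Proof.
rewrite /Phi; apply: eq_bigr => e _; congr pot.
by apply: eq_bigr => j _; rewrite ffunE.
Qed.

End Game.
Arguments ld {n E}. Arguments lo {n E}. Arguments pot {R E}. Arguments Phi {R n E}.
Arguments Phi_ffun {R n E}. Arguments Phi_upd {R n E}. Arguments exch {R n E}.
Arguments cost_upd_le {R n E alpha}. Arguments per_res {R E alpha}. Arguments SUM_res {R n E}.


Theorem mainTheorem10 (R : realFieldType) (n : nat) (E : finType)
  (Sigma : 'I_n -> {set {set E}}) (alpha : E -> 'I_4 -> R)
  (hSigma : forall i, Sigma i != set0)
  (halpha : forall e j, 0 <= alpha e j) :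
  exists S : 'I_n -> {set E},
    isPNE Sigma alpha S /\
    forall T : 'I_n -> {set E}, feasible Sigma T ->
      SUM alpha S <= (3322%:R / 1000%:R) * SUM alpha T.
Proof.
pose Pf := [pred f : {ffun 'I_n -> {set E}} | [forall i, f i \in Sigma i]].
have Pf_feas (T : 'I_n -> {set E}) : feasible Sigma T -> Pf [ffun j => T j].
  by move=> hT; apply/forallP => i; rewrite ffunE.
have [f0 Pf0] : exists f0, Pf f0.
  exists [ffun i => odflt set0 [pick s in Sigma i]]; apply/forallP => i.
  rewrite ffunE; case: pickP => [s Hs //|H].
  by have /set0Pn [s Hs] := hSigma i; move: (H s); rewrite Hs.
case: (arg_minP (fun f : {ffun 'I_n -> {set E}} => Phi alpha f) Pf0) => S0 PS0 HS0.
have fS0 : feasible Sigma S0 by move=> i; exact: (forallP PS0 i).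
have NE : forall i t, t \in Sigma i -> cost alpha S0 i <= cost alpha (update S0 i t) i.
  move=> i t ht.
  have Pu : Pf [ffun j => update S0 i t j].
    apply: Pf_feas => j; rewrite /update; case: eqP => [->|_] //; exact: fS0.
  have := HS0 _ Pu; rewrite Phi_ffun => hle.
  have := Phi_upd alpha S0 i t; lra.
exists S0; split; first by split.
move=> T hT.
have hPhi : Phi alpha S0 <= Phi alpha T by rewrite -(Phi_ffun alpha T); apply: HS0; exact: Pf_feas.
have hNE : SUM alpha S0 <= \sum_e (ld T e)%:R * cubic_latency alpha e (ld S0 e).+1%:R.
  rewrite -exch /SUM; apply: ler_sum => i _.
  apply: le_trans (NE i (T i) (hT i)) _; exact: cost_upd_le.
have hres := ler_sum (index_enum E) (P := xpredT) (fun e (_ : true) => per_res halpha e (ld S0 e) (ld T e)).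
rewrite -mulr_sumr -SUM_res !big_split /= -!mulr_sumr !sumrB -SUM_res in hres.
move: hres; rewrite -/(Phi alpha T) -/(Phi alpha S0).
lra.
Qed.
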